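(* Let $F:X\to X$ be an interaction, let $S\in st_0(\Gamma_F)$, and let $\mathcal{X}_SF$ be the expansion of $F$ over $S$. If $\tilde\Lambda_{pq}$ are constants satisfying the Lipschitz condition for $\mathcal{X}_SF$ with $\rho(\tilde\Lambda)<1$, then $F$ has a globally attracting fixed point, i.e. there exists $\bar x\in X$ such that $F^k(y)\to\bar x$ as $k\to\infty$ for every $y\in X$.
   Context: Let $\mathcal{I}=\{1,\dots,n\}$, $(X_i,d)$ compact metric spaces, $X=\prod_iX_i$ with $d_{\max}(x,y)=\max_id(x_i,y_i)$. An interaction $F:X\to X$ is given by nonempty $\mathcal{I}_j\subseteq\mathcal{I}$ and continuous $F_j:\prod_{i\in\mathcal{I}_j}X_i\to X_j$ with $F(x)_j=F_j(\{x_i\}_{i\in\mathcal{I}_j})$, together with constants $\Lambda_{ij}\ge0$ ($\Lambda_{ij}=0$ if $i\notin\mathcal{I}_j$) with $d(F_j(\{x_i\}),F_j(\{y_i\}))\le\sum_{i\in\mathcal{I}_j}\Lambda_{ij}d(x_i,y_i)$. For a map $G$ on a finite product $\prod_pY_p$ of compact metric spaces whose $q$-th component is a continuous function of the coordinates in a set $\mathcal{J}_q$, constants $\tilde\Lambda_{pq}\ge0$ ($=0$ for $p\notin\mathcal{J}_q$) satisfy the Lipschitz condition if $d(G(u)_q,G(w)_q)\le\sum_{p}\tilde\Lambda_{pq}d(u_p,w_p)$ for all $u,w$. $\rho$ is spectral radius. The graph of interactions $\Gamma_F$ has vertices $v_1,\dots,v_n$ and an edge $v_i\to v_j$ of weight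 $\Lambda_{ij}$ when $i\in\mathcal{I}_j$. $st_0(\Gamma_F)$ is the set of nonempty $S\subseteq\{v_1,\dots,v_n\}$ such that the subgraph induced on the complement of $S$ has no directed cycles and no loops; $\mathcal{I}_S=\{j:v_j\in S\}$. A branch is a path of distinct vertices $u_1,\dots,u_m$, or a cycle ($u_1=u_m$, others distinct), with $u_1,u_m\in S$ and interior vertices $u_2,\dots,u_{m-1}\notin S$; $|\beta|=m$; $\mathcal{B}_S(\Gamma_F)$ denotes the set of branches. Expansion $\mathcal{X}_SF$: for each branch $\beta$ with $r=|\beta|-2\ge1$ introduce new coordinates $\eta(\beta,1),\dots,\eta(\beta,r)$ (distinct new indices), each with state space $X_{a_0}$, $v_{a_0}$ the initial vertex of $\beta$; $B_S$ is the product of these spaces and $X|_S=\prod_{j\in\mathcal{I}_S}X_j$. For $j\in\mathcal{I}_S$, start from $F_j(\{x_i\}_{i\in\mathcal{I}_j})$ and repeatedly replace each occurring variable $x_i$ with $i\notin\mathcal{I}_S$ by $F_i(\{x_k\}_{k\in\mathcal{I}_i})$ until only variables with indices in $\mathcal{I}_S$ remain; each occurrence of $x_{a_0}$ nested as $F_j(\dots F_{a_r}(\dots F_{a_1}(\dots x_{a_0}\dots)))$ corresponds to the branch $\beta=v_{a_0},v_{a_1},\dots,v_{a_r},v_j$ and is replaced by $x_{\eta(\beta,r)}$ if $r\ge1$ (unchanged if $r=0$); the result is $\tilde F_j$. Then $\mathcal{X}_SF:X|_S\times B_S\to X|_S\times B_S$ has components $(\mathcal{X}_SF)_j=\tilde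 F_j$ ($j\in\mathcal{I}_S$), $(\mathcal{X}_SF)_{\eta(\beta,1)}=x_{a_0}$, and $(\mathcal{X}_SF)_{\eta(\beta,\ell)}=x_{\eta(\beta,\ell-1)}$ for $2\le\ell\le|\beta|-2$. *)

(* Defs.v *)
From HB Require Import structures.
From mathcomp Require Import all_boot all_order all_algebra.
From mathcomp Require Import classical_sets reals.
From mathcomp Require Import complex.
From mathcomp Require Import zify.

Set Implicit Arguments.
Unset Strict Implicit.
Unset Printing Implicit Defensive.

Import Order.TTheory GRing.Theory Num.Theory.
Local Open Scope ring_scope.

Section Metric.
Variables (R : realType) (T : Type) (d : T -> T -> R).

Definition is_metric : Prop :=
  [/\ forall x y, 0 <= d x y,
      forall x y, d x y = 0 <-> x = y,
      forall x y, d x y = d y x &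
      forall x y z, d x z <= d x y + d y z].

Definition dopen (U : T -> Prop) : Prop :=
  forall x, U x -> exists2 e : R, 0 < e & forall y, d x y < e -> U y.

Definition dcompact : Prop :=
  forall (I : Type) (U : I -> T -> Prop),
    (forall i, dopen (U i)) -> (forall x, exists i, U i x) ->
    exists s : seq I, forall x, exists i, List.In i s /\ U i x.
End Metric.

Definition dmax (R : realType) (I : finType) (Y : I -> Type)
  (dY : forall i, Y i -> Y i -> R) (u w : forall i, Y i) : R :=
  \big[Num.max/0]_(i : I) dY i (u i) (w i).

Definition dcontinuous (R : realType) (I : finType) (Y : I -> Type)
  (dY : forall i, Y i -> Y i -> R) (Z : Type) (dZ : Z -> Z -> R)
  (g : (forall i, Y i) -> Z) : Prop :=
  forall u (e : R), 0 < e -> exists2 del : R, 0 < del &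
    forall w, dmax dY u w < del -> dZ (g u) (g w) < e.

(* Lipschitz condition for constants L p q for a map G on a finite product,
   whose q-th component depends on the coordinates p with J q p *)
Definition lipschitz_consts (R : realType) (I : finType) (Y : I -> Type)
  (dY : forall i, Y i -> Y i -> R) (G : (forall i, Y i) -> forall i, Y i)
  (J : I -> I -> bool) (L : I -> I -> R) : Prop :=
  [/\ forall p q, 0 <= L p q,
      forall p q, ~~ J q p -> L p q = 0 &
      forall u w q, dY q (G u q) (G w q) <= \sum_(p : I) L p q * dY p (u p) (w p)].

Definition spectral_radius (R : realType) (m : nat) (A : 'M[R]_m) : R :=
  sup [set r : R | exists2 l : R[i],
         eigenvalue (map_mx (fun x : R => x%:C%C) A) l & `|l| = r%:C%C].

Definition mx_of (R : realType) (I : finType) (L : I -> I -> R) : 'M[R]_#|I| :=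
  \matrix_(i, j) L (enum_val i) (enum_val j).

Local Close Scope ring_scope.

Section Graph.
Variables (n : nat) (Ij : 'I_n -> {set 'I_n}).

Definition gedge : rel 'I_n := fun i j => i \in Ij j.

(* S \in st_0(Gamma_F): S nonempty and the subgraph induced on the complement
   of S has no directed cycles and no loops.  A directed cycle (or a loop,
   when p = [:: c]) is c :: p with p nonempty, the walk following edges,
   returning to c, with the vertices of p pairwise distinct. *)
Definition st0 (S : {set 'I_n}) : Prop :=
  S != finset.set0 /\
  forall (c : 'I_n) (p : seq 'I_n),
    ~ [/\ p != [::], path gedge c p, last c p = c, uniq p &
          all (fun v => v \notin S) (c :: p)].

Definition is_branch (S : {set 'I_n}) (beta : seq 'I_n) : bool :=
  match beta with
  | [::] => false
  | a0 :: rest =>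
      [&& 0 < size rest, path gedge a0 rest, a0 \in S, last a0 rest \in S,
          all (fun v => v \notin S) (behead (belast a0 rest)) &
          uniq (a0 :: rest) || ((last a0 rest == a0) && uniq rest)]
  end.

(* finite encoding of a sequence of length <= n + 1 : head and tail tuple *)
Definition bcode := ('I_n * {m : 'I_n.+1 & m.-tuple 'I_n})%type.
Definition bseq (c : bcode) : seq 'I_n := c.1 :: tval (tagged c.2).

Variable S : {set 'I_n}.

(* raw indices of the expansion: inl j (j in I_S) or inr (beta, l) = eta(beta,l) *)
Definition eraw := ('I_n + (bcode * 'I_n.+1))%type.

Definition eidx (v : eraw) : bool :=
  match v with
  | inl j => j \in S
  | inr (c, l) => [&& is_branch S (bseq c), 3 <= size (bseq c),
                      1 <= l & l <= size (bseq c) - 2]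
  end.

Definition EI := {v : eraw | eidx v}.

Definition base' (v : eraw) : 'I_n :=
  match v with inl j => j | inr (c, _) => c.1 end.
Definition base (p : EI) : 'I_n := base' (val p).

(* dependency sets: J q p  <->  coordinate p occurs in (X_S F)_q *)
Definition dep (q p : EI) : bool :=
  match val q, val p with
  | inl j, inl k => k \in Ij j
  | inl j, inr (c, l) => (last c.1 (tval (tagged c.2)) == j) &&
                         ((l : nat) == size (bseq c) - 2)
  | inr (c, l), inl k => ((l : nat) == 1) && (k == c.1)
  | inr (c, l), inr (c', l') => (c' == c) && ((l : nat) != 1) &&
                                ((l' : nat) == (l : nat).-1)
  end.

Lemma eidx_head (c : bcode) (l : 'I_n.+1) :
  eidx (inr (c, l)) -> eidx (inl c.1).
Proof.
rewrite /eidx /bseq /is_branch => /and4P[/and5P[_ _ H _ _] _ _ _] //.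
Qed.

Lemma eidx_pred (c : bcode) (l : 'I_n.+1) :
  eidx (inr (c, l)) -> ((l : nat) == 1) = false ->
  eidx (inr (c, inord (l : nat).-1)).
Proof.
move=> /and4P[Hb H3 H1 H2] Hl; apply/and4P; split => //;
  rewrite inordK; [| by have := ltn_ord l; lia | | by have := ltn_ord l; lia];
  move/eqP: Hl; lia.
Qed.

End Graph.

Section Expansion.
Variables (n : nat) (X : 'I_n -> Type) (Ij : 'I_n -> {set 'I_n}).
Variable Fj : forall j : 'I_n, (forall k : {k : 'I_n | k \in Ij j}, X (val k)) -> X j.

Definition Fmap (x : forall i, X i) : forall j, X j :=
  fun j => Fj (fun k : {k : 'I_n | k \in Ij j} => x (val k)).

Variable S : {set 'I_n}.
(* x0 : default points, only used in unreachable branches of the recursion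
   (recursion depth is bounded when S \in st_0) *)
Variable x0 : forall i, X i.
Variable x : forall p : EI Ij S, X (base p).

Definition look (v : eraw n) (H : eidx Ij S v) : X (base' v) :=
  x (exist _ v H).

(* the variable replacing an occurrence of x_k (k in S) nested as
   F_j(... F_{a_r}(... F_{a_1}(... x_k ...))), where q = [:: a_1; ...; a_r; j];
   the branch is beta = k :: q and r = size q - 1 *)
Definition argS (k : 'I_n) (HkS : k \in S) (q : seq 'I_n) : X k :=
  if size q == 1%N then look (v := inl k) HkS
  else match (insub q : option ((inord (size q) : 'I_n.+1).-tuple 'I_n)) with
  | Some t =>
      let v : eraw n :=
        inr ((k, existT (fun m : 'I_n.+1 => m.-tuple 'I_n) (inord (size q)) t),
             inord (size q).-1) in
      (if eidx Ij S v as b return eidx Ij S v = b -> X k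
       then fun H => look H else fun _ => look (v := inl k) HkS) (erefl _)
  | None => look (v := inl k) HkS
  end.

(* value of the substituted expression for F_c, where q lists the vertices
   from c up to the top index j *)
Fixpoint evalE (fuel : nat) (c : 'I_n) (q : seq 'I_n) {struct fuel} : X c :=
  Fj (fun k : {k : 'I_n | k \in Ij c} =>
    (if val k \in S as b return (val k \in S) = b -> X (val k)
     then fun HkS => argS HkS q
     else fun _ => match fuel with
                   | 0 => x0 (val k)
                   | fuel'.+1 => evalE fuel' (val k) (val k :: q)
                   end) (erefl _)).

Definition expcomp (v : eraw n) : eidx Ij S v -> X (base' v) :=
  match v as v0 return eidx Ij S v0 -> X (base' v0) with
  | inl j => fun _ => evalE n j [:: j]
  | inr (c, l) => fun H =>
      (if (l : nat) == 1%N as b return ((l : nat) == 1%N) = b -> X c.1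
       then fun _ => look (v := inl c.1) (eidx_head H)
       else fun Hl => look (v := inr (c, inord (l : nat).-1)) (eidx_pred H Hl))
      (erefl _)
  end.

End Expansion.

Definition expansion (n : nat) (X : 'I_n -> Type) (Ij : 'I_n -> {set 'I_n})
  (Fj : forall j : 'I_n, (forall k : {k : 'I_n | k \in Ij j}, X (val k)) -> X j)
  (S : {set 'I_n}) (x0 : forall i, X i)
  (x : forall p : EI Ij S, X (base p)) : forall p : EI Ij S, X (base p) :=
  fun p => @expcomp n X Ij Fj S x0 x (val p) (valP p).

(* Main.v *)
Require Import Defs.
From HB Require Import structures.
From mathcomp Require Import all_boot all_order all_algebra.
From mathcomp Require Import classical_sets reals complex.
From mathcomp Require Import zify lra.
From Stdlib Require Import Classical FunctionalExtensionality ClassicalEpsilon.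
Import Order.TTheory GRing.Theory Num.Theory.
Local Open Scope ring_scope.
Set Implicit Arguments.
Unset Strict Implicit.

Lemma fin_exists_max (I : finType) (P : I -> nat -> Prop) :
  (forall i N M, (N <= M)%N -> P i N -> P i M) ->
  (forall i, exists N, P i N) -> exists N, forall i, P i N.
Proof.
move=> Pmon Pex.
suff [N HN] : exists N, forall i, i \in enum I -> P i N.
  by exists N => i; apply: HN; rewrite mem_enum.
elim: (enum I) => [|i s [N HN]]; first by exists 0%N.
have [Ni HNi] := Pex i.
exists (maxn N Ni) => j; rewrite inE => /orP[/eqP->|js].
  by apply: Pmon HNi; apply: leq_maxr.
by apply: Pmon (HN j js); apply: leq_maxl.
Qed.

Lemma dep_if_true (b : bool) (P : Type) (f : b = true -> P) (g : b = false -> P)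
  (H : b = true) :
  (if b as b' return b = b' -> P then f else g) (erefl b) = f H.
Proof.
move: f g H; case: b => f g H //.
by rewrite (eq_irrelevance H erefl).
Qed.

Lemma dep_if_false (b : bool) (P : Type) (f : b = true -> P) (g : b = false -> P)
  (H : b = false) :
  (if b as b' return b = b' -> P then f else g) (erefl b) = g H.
Proof.
move: f g H; case: b => f g H //.
by rewrite (eq_irrelevance H erefl).
Qed.

Section Reals.
Variable R : realType.

Definition cvg0 (u : nat -> R) :=
  forall e : R, 0 < e -> exists N, forall k, (N <= k)%N -> `|u k| < e.

Lemma rec_cvg0 (a : R) (w r : nat -> R) : 0 <= a -> a < 1 ->
  (forall k, 0 <= w k) -> (forall k, w k.+1 <= a * w k + r k) -> cvg0 r -> cvg0 w.
Proof.
move=> a0 a1 w0 wr rc e e0.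
set del := (1 - a) * e / 2.
have del0 : 0 < del by rewrite /del; apply: divr_gt0 => //; apply: mulr_gt0 => //; lra.
have [N HN] := rc del del0.
have step_small k : (N <= k)%N -> w k < e -> w k.+1 < e.
  move=> Nk wke; have := HN k Nk; have := wr k; have := ler_norm (r k).
  have : a * w k <= a * e by apply: ler_wpM2l => //; apply: ltW.
  rewrite /del; nra.
have step_big k : (N <= k)%N -> e <= w k -> w k.+1 <= w k - del.
  move=> Nk wke; have := HN k Nk; have := wr k; have := ler_norm (r k).
  have : a * w k <= w k - (1 - a) * e.
    have : (1 - a) * e <= (1 - a) * w k by apply: ler_wpM2l => //; lra.
    lra.
  rewrite /del; lra.
have C m : w (N + m)%N < e \/ w (N + m)%N <= w N - m%:R * del.
  elim: m => [|m [IH|IH]]; first by right; rewrite addn0 mul0r subr0.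
    by left; rewrite addnS; apply: step_small => //; apply: leq_addr.
  have [lt|ge] := ltP (w (N + m)%N) e.
    by left; rewrite addnS; apply: step_small => //; apply: leq_addr.
  right; rewrite addnS; have := step_big _ (leq_addr m N) ge.
  rewrite -natr1 mulrDl mul1r; lra.
set M := Num.Def.archi_bound (w N / del).
have HM : w N / del < M%:R by apply: archi_boundP; apply: divr_ge0 => //; apply: ltW.
have HM' : w N < M%:R * del by rewrite -ltr_pdivrMr.
have HNM : w (N + M)%N < e.
  case: (C M) => // H; have := w0 (N + M)%N; lra.
exists (N + M)%N => k Nk; rewrite ger0_norm //.
rewrite -(subnKC Nk); elim: (k - (N + M))%N => [|j IH]; first by rewrite addn0.
by rewrite addnS; apply: step_small => //; rewrite -addnA leq_addr.
Qed.

End Reals.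

Unset Implicit Arguments.
Set Strict Implicit.

Section Metric2.
Variables (R : realType) (T : Type) (d : T -> T -> R).
Hypothesis Hm : is_metric d.
Hypothesis Hc : dcompact d.

Lemma d_ge0 x y : 0 <= d x y. Proof. by case: Hm. Qed.
Lemma d_xx x : d x x = 0. Proof. by case: Hm => _ H _ _; exact: (proj2 (H x x)). Qed.
Lemma d_sym x y : d x y = d y x. Proof. by case: Hm. Qed.
Lemma d_tri x y z : d x z <= d x y + d y z. Proof. by case: Hm. Qed.
Lemma d_eq0 x y : d x y = 0 -> x = y. Proof. by case: Hm => _ H _ _; exact: (proj1 (H x y)). Qed.

Lemma ball_open x e : dopen d (fun y => d x y < e).
Proof.
move=> y Hy; exists (e - d x y); first by lra.
move=> z Hz; have := d_tri x y z; lra.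
Qed.

Lemma In_le_fold (s : seq nat) i : List.In i s -> (i <= foldr maxn 0 s)%N.
Proof.
elim: s => //= j s IH [->|/IH]; first by apply: leq_maxl.
by move=> H; apply: leq_trans H (leq_maxr _ _).
Qed.

Lemma compact_bounded x0 : exists B : nat, forall y, d x0 y < B%:R.
Proof.
have [s Hs] := Hc nat (fun k y => d x0 y < k%:R)
  (fun k => ball_open x0 k%:R)
  (fun y => ex_intro (fun i : nat => d x0 y < i%:R) _ (archi_boundP (d_ge0 x0 y))).
exists (foldr maxn 0 s) => y; have [i [Hi Hy]] := Hs y.
by apply: (lt_le_trans Hy); rewrite ler_nat; apply: In_le_fold.
Qed.

Definition cauchy (a : nat -> T) := forall e : R, 0 < e -> exists N,
  forall k m, (N <= k)%N -> (N <= m)%N -> d (a k) (a m) < e.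
Definition dconv (a : nat -> T) (L : T) := forall e : R, 0 < e -> exists N,
  forall k, (N <= k)%N -> d (a k) L < e.

Lemma cauchy_conv a : cauchy a -> exists L, dconv a L.
Proof.
move=> Hca; apply: NNPP => Hno.
have Hx : forall x, exists e : R, exists N, 0 < e /\
    forall k, (N <= k)%N -> e <= d x (a k).
  move=> x; have Hnx : ~ dconv a x by move=> H; apply: Hno; exists x.
  apply: NNPP => Hne; apply: Hnx => e e0.
  have [N0 HN0] := Hca (e / 2) (divr_gt0 e0 (ltr0Sn _ 1)).
  apply: NNPP => HnN.
  have : exists k, (N0 <= k)%N /\ d x (a k) < e / 2.
    apply: NNPP => Hk; apply: Hne; exists (e / 2), N0; split.
      by apply: divr_gt0.
    move=> k Nk; rewrite leNgt; apply/negP => Hlt; apply: Hk; by exists k.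
  move=> [k [Nk Hk]]; apply: HnN; exists N0 => m Nm.
  have := HN0 m k Nm Nk; have := d_tri (a m) (a k) x; rewrite (d_sym x (a k)) in Hk.
  lra.
pose I := {p : T * R * nat | 0 < p.1.2 /\
  forall k, (p.2 <= k)%N -> p.1.2 <= d p.1.1 (a k)}.
have Hcov : forall y, exists i : I, d (sval i).1.1 y < (sval i).1.2.
  move=> y; have [e [N [e0 HN]]] := Hx y.
  exists (exist _ (y, e, N) (conj e0 HN)) => /=; by rewrite d_xx.
have [s Hs] := Hc I (fun i y => d (sval i).1.1 y < (sval i).1.2)
  (fun i => ball_open _ _) Hcov.
set K := foldr maxn 0 (map (fun i => (sval i).2) s).
have [i [Hi Hy]] := Hs (a K).
case: (svalP i) => _ /(_ K) H.
have : d (sval i).1.1 (a K) < d (sval i).1.1 (a K).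
  apply: lt_le_trans Hy (H _); apply: In_le_fold.
  by apply: (List.in_map (fun i => (sval i).2)).
by rewrite ltxx.
Qed.

End Metric2.

Set Implicit Arguments.
Unset Strict Implicit.

Section Spec.
Variable R : realType.
Local Notation C := R[i].

Lemma normc_norm (z : C) : `|z| = (Normc.normc z)%:C%C.
Proof. by case: z => a b; rewrite normc_def. Qed.

Lemma normc_real (x : R) : Normc.normc (x%:C%C) = `|x|.
Proof. by rewrite /= expr0n /= addr0 sqrtr_sqr. Qed.

Lemma normc_ge0' (z : C) : 0 <= Normc.normc z.
Proof. by case: z => a b /=; apply: sqrtr_ge0. Qed.

Fixpoint apl (rs : seq C) (u : nat -> C) : nat -> C :=
  match rs with
  | [::] => u
  | z :: rs' => apl rs' (fun k => u k.+1 - z * u k)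
  end.

Lemma apl_cvg rs u : all (fun z => Normc.normc z < 1) rs ->
  (forall k, apl rs u k = 0) -> cvg0 (fun k => Normc.normc (u k)).
Proof.
elim: rs u => [|z rs IH] u /=.
  move=> _ H e e0; exists 0%N => k _; rewrite H Normc.normc0 normr0 //.
move=> /andP[zlt Hall] H0.
have := IH _ Hall H0 => Hv.
apply: (rec_cvg0 (a := Normc.normc z) (r := fun k => Normc.normc (u k.+1 - z * u k))) => //.
- exact: normc_ge0'.
- move=> k; exact: normc_ge0'.
- move=> k; have := le_normcD (z * u k) (u k.+1 - z * u k).
  by rewrite addrC subrK Normc.normcM.
Qed.

Variable N : nat.
Variable A : 'M[R]_N.+1.
Local Notation B := (map_mx (fun x : R => x%:C%C) A).

Lemma B_pow k i j : (B ^+ k) i j = ((A ^+ k) i j)%:C%C.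
Proof.
have -> : B = map_mx (real_complex R) A by [].
suff -> : map_mx (real_complex R) A ^+ k = map_mx (real_complex R) (A ^+ k).
  by rewrite mxE.
elim: k => [|k IH]; first by rewrite !expr0 map_mx1.
by rewrite !exprSr IH -!mulmxE map_mxM.
Qed.

Lemma entryBZ (P Q : 'M[C]_N.+1) z i j : (P - z *: Q) i j = P i j - z * Q i j.
Proof. by rewrite !mxE. Qed.

Lemma apl_mx rs (M : 'M[C]_N.+1) i j k :
  apl rs (fun k => (B ^+ k *m M) i j) k =
  (B ^+ k *m (horner_mx B (\prod_(z <- rs) ('X - z%:P)) *m M)) i j.
Proof.
elim: rs M k => [|z rs IH] M k /=.
  by rewrite big_nil rmorph1 mul1mx.
have -> : (fun k => (B ^+ k.+1 *m M) i j - z * (B ^+ k *m M) i j) =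
          (fun k => (B ^+ k *m ((B - z%:M) *m M)) i j).
  apply: functional_extensionality => m; rewrite mulmxBl mulmxBr !mulmxA exprSr !mulmxE.
  rewrite -[_ ^+ m * z%:M]/(_ *m _) mul_mx_scalar.
  by rewrite -[(z *: _) * M]/((z *: _) *m M) -scalemxAl entryBZ.
rewrite IH big_cons mulrC rmorphM /= rmorphB /= horner_mx_X horner_mx_C.
by rewrite !mulmxE !mulrA.
Qed.

Lemma spec_cvg0 : spectral_radius A < 1 -> forall i j, cvg0 (fun k => (A ^+ k) i j).
Proof.
move=> Hr i j.
have [rs Hrs] := closed_field_poly_normal (char_poly B).
have lc : lead_coef (char_poly B) = 1 := monicP (char_poly_monic B).
rewrite lc scale1r in Hrs.
have Heig z : eigenvalue B z = (z \in rs).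
  by rewrite eigenvalue_root_char Hrs root_prod_XsubC.
move: Hr; rewrite /spectral_radius.
set E := (X in sup X) => Hr.
have ubE : has_ubound E.
  exists (\sum_(z <- rs) Normc.normc z) => r [l Hl Hn].
  rewrite normc_norm in Hn; move/complexI: Hn => <-.
  rewrite Heig in Hl; rewrite (big_rem l) //= lerDl.
  by apply: sumr_ge0 => z _; apply: normc_ge0'.
have Hall : all (fun z => Normc.normc z < 1) rs.
  apply/allP => z zr; apply: le_lt_trans Hr.
  apply: ub_le_sup => //; exists z; first by rewrite Heig.
  by rewrite normc_norm.
have H0 k : apl rs (fun k => (B ^+ k *m 1%:M) i j) k = 0.
  by rewrite apl_mx -Hrs Cayley_Hamilton mul0mx mulmx0 mxE.
have := apl_cvg Hall H0 => Hc e e0; have [M HM] := Hc e e0.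
exists M => k Mk; have := HM k Mk.
by rewrite mulmx1 B_pow normc_real normr_id.
Qed.

End Spec.


Section Comb.
Variables (R : realType) (n : nat) (X : 'I_n -> Type).
Variable (x0 : forall i, X i) (Ij : 'I_n -> {set 'I_n}).
Variable Fj : forall j : 'I_n, (forall k : {k : 'I_n | k \in Ij j}, X (val k)) -> X j.
Variable S : {set 'I_n}.
Hypothesis HS : st0 Ij S.

Lemma cyc_free (kk : 'I_n) (q : seq 'I_n) : kk \notin S -> path (gedge Ij) kk q ->
  uniq q -> kk \in q -> all (fun v => v \notin S) (take (index kk q).+1 q) -> False.
Proof.
move=> kS Hp Hu kq Hall.
apply: (HS.2 kk (take (index kk q).+1 q)); split.
- by case: q kq {Hp Hu Hall}.
- exact: take_path.
- rewrite (last_nth kk) size_take.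
  have iq : (index kk q < size q)%N by rewrite index_mem.
  have -> : (if ((index kk q).+1 < size q)%N then (index kk q).+1 else size q)
    = (index kk q).+1 by case: ltnP => //; lia.
  by rewrite /= nth_take // nth_index.
- by apply: take_uniq.
- by rewrite /= kS.
Qed.

Lemma uniq_size_le (q : seq 'I_n) : uniq q -> (size q <= n)%N.
Proof.
move=> Hu; have := uniq_leq_size Hu (fun x _ => mem_enum _ x).
by rewrite size_enum_ord.
Qed.

Definition Fm := Fmap Fj.
Definition xs (y : forall i, X i) (k : nat) := iter k Fm y.
Definition zz y k : forall p : EI Ij S, X (base p) := fun p =>
  match val p as v return X (base' v) with
  | inl j => xs y k j
  | inr (c, l) => xs y (k - l) c.1
  end.

Lemma xsS y m : xs y m.+1 = Fm (xs y m).
Proof. by rewrite /xs iterS. Qed.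

Lemma mem_belast_S (kk c : 'I_n) q' : kk \in c :: q' -> last c q' \in S ->
  all (fun v => v \notin S) (belast c q') -> kk \notin S -> kk \in belast c q'.
Proof.
rewrite (lastI c q') mem_rcons inE => /orP[/eqP->|//] Hl _ Hk.
by rewrite Hl in Hk.
Qed.

Lemma kk_notin (kk c : 'I_n) q' : kk \notin S -> kk \in Ij c -> path (gedge Ij) c q' ->
  last c q' \in S -> all (fun v => v \notin S) (belast c q') -> uniq (c :: q') ->
  kk \notin c :: q'.
Proof.
move=> kS kc Hp Hl Hb Hu; apply/negP => kq.
have kb := mem_belast_S kq Hl Hb kS.
apply: (cyc_free kS _ _ kq) => //; first by rewrite /= Hp andbT.
rewrite (lastI c q') -cats1 index_cat kb takel_cat; last by rewrite index_mem.
apply/allP => v /mem_take vb; by move/allP: Hb; apply.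
Qed.

Lemma argS_eq y k (kk : 'I_n) (HkS : kk \in S) (c : 'I_n) q' :
  kk \in Ij c -> path (gedge Ij) c q' -> last c q' \in S ->
  all (fun v => v \notin S) (belast c q') -> uniq (c :: q') -> (n <= k)%N ->
  argS (zz y k) HkS (c :: q') = xs y (k - size q') kk.
Proof.
move=> kc Hp Hl Hb Hu Hk.
have Hsz : (size (c :: q') <= n)%N := uniq_size_le Hu.
rewrite /argS; case: eqP => [Hs1|Hs1].
  by rewrite /look /=; move: Hs1 => /= [->]; rewrite subn0.
case: insubP => [t Ht Hval|Hn]; last first.
  by exfalso; move/negP: Hn; apply; rewrite inordK.
have q'1 : (1 <= size q')%N by move: Hs1 => /= Hs1; lia.
have Heidx : eidx Ij S (inr ((kk, existT (fun m : 'I_n.+1 => m.-tuple 'I_n)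
    (inord (size (c :: q'))) t), inord (size (c :: q')).-1)) = true.
  rewrite /eidx /bseq /= -[tval t]/(val t) Hval.
  have sq : (size q' < n.+1)%N by move: Hsz => /=; lia.
  rewrite inordK // Hu !andbT.
  have -> : (2 < (size (c :: q')).+1)%N by rewrite /=; lia.
  have -> : (size q' <= (size (c :: q')).+1 - 2)%N by rewrite /=; lia.
  rewrite q'1 /= [gedge Ij kk c]/gedge kc Hp HkS Hl Hb /= andbT.
  case kq : (kk \in c :: q'); last by [].
  move: kq; rewrite (lastI c q') mem_rcons inE => /orP[/eqP->|kb]; first by rewrite eqxx orbT.
  by move/allP: Hb => /(_ _ kb); rewrite HkS.
rewrite (dep_if_true _ _ Heidx) /look /zz /= inordK //.
by move: Hsz => /=; lia.
Qed.
Definition Inv fuel (c : 'I_n) q := exists q', [/\ q = c :: q', path (gedge Ij) c q',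
  last c q' \in S, all (fun v => v \notin S) (belast c q') & uniq q /\
  (n.+1 <= fuel + size q)%N].

Lemma evalE_eq fuel : forall c q y k, Inv fuel c q -> (n <= k)%N ->
  evalE Fj x0 (zz y k) fuel c q = xs y (k.+1 - (size q).-1) c.
Proof.
elim: fuel => [|fuel IH] c q y k [q' [-> Hp Hl Hb [Hu Hf]]] Hk.
all: have Hsz : (size (c :: q') <= n)%N := uniq_size_le Hu.
  by exfalso; move: Hf Hsz => /=; lia.
have -> : (k.+1 - (size (c :: q')).-1 = (k - size q').+1)%N by move: Hsz => /=; lia.
rewrite xsS /Fm /Fmap /=; congr (Fj _); apply: functional_extensionality_dep => kk.
have [HkS|HkS] : (val kk \in S) = true \/ (val kk \in S) = false.
  by case: (val kk \in S); [left|right].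
- rewrite (@dep_if_true _ _ (fun H => argS (zz y k) H (c :: q')) _ HkS).
  by rewrite (argS_eq y HkS (valP kk) Hp Hl Hb Hu Hk).
- rewrite (dep_if_false _ _ HkS); move/negbT: HkS => HkS.
  have Hn := kk_notin HkS (valP kk) Hp Hl Hb Hu.
  rewrite IH //.
  exists (c :: q'); split => //.
  + by rewrite /= [gedge _ _ _]/gedge (valP kk) Hp.
  + by rewrite /= HkS.
  + by split; [rewrite cons_uniq Hn Hu | move: Hf => /=; lia].
Qed.
Lemma exp_eq y k p : (n <= k)%N -> expansion Fj x0 (zz y k) p = zz y k.+1 p.
Proof.
move=> Hk; case: p => [[j|[c l]] H].
  rewrite /expansion /expcomp /= (evalE_eq (q := [:: j])) //.
  exists [::]; split => //; split => //; by rewrite addn1.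
rewrite /expansion /=.
have [Hl|Hl] : ((l : nat) == 1%N) = true \/ ((l : nat) == 1%N) = false.
  by case: (_ == _); [left|right].
  rewrite (dep_if_true _ _ Hl) /look /zz /=; move/eqP: Hl => ->.
  by rewrite subn1.
rewrite (dep_if_false _ _ Hl) /look /zz /= inordK; last by have := ltn_ord l; lia.
have H1 : (1 <= l)%N by move: H => /and4P[].
have H2 := ltn_ord l.
move/negbT: Hl => Hl.
have -> : (k.+1 - l = k - (l : nat).-1)%N by lia.
by [].
Qed.
End Comb.

Unset Implicit Arguments.
Set Strict Implicit.

Lemma spec_cvg0_any (R : realType) (N : nat) (A : 'M[R]_N) :
  spectral_radius A < 1 -> forall i j, cvg0 (fun k => (A ^+ k) i j).
Proof. by case: N A => [|N] A Hr i; [case: i | exact: spec_cvg0]. Qed.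

Section Main.
Variables (R : realType) (n : nat) (X : 'I_n -> Type) (d : forall i, X i -> X i -> R).
Hypothesis Hmetric : forall i, is_metric (d i).
Hypothesis Hcompact : forall i, dcompact (d i).
Variables (x0 : forall i, X i) (Ij : 'I_n -> {set 'I_n}).
Variable Fj : forall j : 'I_n, (forall k : {k : 'I_n | k \in Ij j}, X (val k)) -> X j.
Variable Lam : 'I_n -> 'I_n -> R.
Hypothesis HLam0 : forall i j, 0 <= Lam i j.
Hypothesis HLip : forall j (a b : forall k : {k : 'I_n | k \in Ij j}, X (val k)),
      d j (Fj j a) (Fj j b)
      <= \sum_(k : {k : 'I_n | k \in Ij j}) Lam (val k) j * d (val k) (a k) (b k).
Variable S : {set 'I_n}.
Hypothesis HS : st0 Ij S.
Variable Lt : EI Ij S -> EI Ij S -> R.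
Hypothesis HLt : lipschitz_consts (fun p : EI Ij S => d (base p))
           (expansion Fj x0) (@dep n Ij S) Lt.
Hypothesis Hrho : spectral_radius (mx_of Lt) < 1.

Local Notation EIS := (EI Ij S).
Local Notation XS := (xs Fj).
Local Notation ZZ := (zz Fj (S := S)).

Let dtri i : forall x y z, d i x z <= d i x y + d i y z := d_tri _ _ _ (Hmetric i).
Let dsym i : forall x y, d i x y = d i y x := d_sym _ _ _ (Hmetric i).
Let dge0 i : forall x y, 0 <= d i x y := d_ge0 _ _ _ (Hmetric i).
Let deq0 i : forall x y, d i x y = 0 -> x = y := d_eq0 _ _ _ (Hmetric i).

Lemma bound_all : exists B : R, 0 <= B /\ forall i (u w : X i), d i u w <= B.
Proof.
have [B HB] : exists B : nat, forall i (y : X i), d i (x0 i) y < B%:R.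
  apply: (fin_exists_max (P := fun i (B : nat) => forall y : X i, d i (x0 i) y < B%:R)).
    move=> i N M NM H y; apply: lt_le_trans (H y) _; by rewrite ler_nat.
  by move=> i; apply: compact_bounded.
exists (B%:R + B%:R); split; first by apply: addr_ge0; apply: ler0n.
move=> i u w; have := dtri i u (x0 i) w.
rewrite (dsym i u (x0 i)); have := HB i u; have := HB i w; lra.
Qed.

Definition Pm m (p q : EIS) := (mx_of Lt ^+ m) (enum_rank p) (enum_rank q).

Lemma Pm_S m p q : Pm m.+1 p q = \sum_r Pm m p r * Lt r q.
Proof.
rewrite /Pm exprSr -[_ * mx_of Lt]/(_ *m _) mxE.
rewrite (reindex enum_rank) /=; last by apply: onW_bij; apply: enum_rank_bij.
by apply: eq_bigr => r _; rewrite /mx_of mxE !enum_rankK.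
Qed.

Lemma Pm0 p q : Pm 0 p q = (p == q)%:R.
Proof. by rewrite /Pm expr0 mxE (inj_eq enum_rank_inj). Qed.

Lemma Pm_ge0 m p q : 0 <= Pm m p q.
Proof.
elim: m p q => [|m IH] p q; first by rewrite Pm0 ler0n.
rewrite Pm_S; apply: sumr_ge0 => r _; apply: mulr_ge0 => //.
by case: HLt.
Qed.

Lemma D_bound B y y' m q : 0 <= B -> (forall i (u w : X i), d i u w <= B) ->
  d (base q) (ZZ y (n + m) q) (ZZ y' (n + m) q) <= B * \sum_p Pm m p q.
Proof.
move=> B0 HB; elim: m q => [|m IH] q.
  rewrite (bigD1 q) //= Pm0 eqxx big1 ?addr0 ?mulr1 //.
  by move=> p /negbTE pq; rewrite Pm0 pq.
case: HLt => Hl0 _ Hlip.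
have := Hlip (ZZ y (n + m)) (ZZ y' (n + m)) q.
rewrite !exp_eq ?leq_addr // -!addnS => H; apply: le_trans H _.
rewrite [X in _ <= B * X](eq_bigr _ (fun p _ => Pm_S m p q)).
rewrite exchange_big mulr_sumr; apply: ler_sum => r _.
rewrite -mulr_suml mulrA mulrC; apply: ler_wpM2r; first by apply: Hl0.
exact: IH.
Qed.

Lemma S_unif e : 0 < e -> exists K, forall k, (K <= k)%N ->
  forall y y' j, j \in S -> d j (XS y k j) (XS y' k j) < e.
Proof.
move=> e0; have [B [B0 HB]] := bound_all.
set N : R := #|{: EIS}|%:R.
have N0 : 0 <= N by apply: ler0n.
have c0 : 0 < (B + 1) * (N + 1) by apply: mulr_gt0; lra.
set del := e / ((B + 1) * (N + 1)).
have del0 : 0 < del by apply: divr_gt0.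
have He : (B + 1) * (N + 1) * del = e.
  by rewrite /del mulrC -mulrA mulVf ?mulr1 //; apply: lt0r_neq0.
have [M HM] : exists M, forall pq : EIS * EIS, forall m, (M <= m)%N ->
    `|Pm m pq.1 pq.2| < del.
  apply: (fin_exists_max (P := fun pq M => forall m, (M <= m)%N ->
     `|Pm m pq.1 pq.2| < del)).
    by move=> pq a b ab H m bm; apply: H; apply: leq_trans ab bm.
  move=> [p q]; have [Mpq HMpq] := spec_cvg0_any _ _ _ Hrho (enum_rank p) (enum_rank q) _ del0.
  by exists Mpq.
exists (n + M)%N => k Hk y y' j Hj.
have [m -> Mm] : exists2 m, k = (n + m)%N & (M <= m)%N.
  by exists (k - n)%N; lia.
have := D_bound B y y' m (exist _ (inl j) Hj) B0 HB => /= H.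
apply: le_lt_trans H _.
have Hs : \sum_p Pm m p (exist _ (inl j) Hj) <= del * N.
  apply: le_trans (_ : \sum_(p : EIS) del <= _).
    apply: ler_sum => p _; have := HM (p, exist _ (inl j) Hj) m Mm => /=.
    by rewrite ger0_norm ?Pm_ge0 // => /ltW.
  by rewrite sumr_const -mulr_natr.
have : B * \sum_p Pm m p (exist _ (inl j) Hj) <= B * (del * N).
  by apply: ler_wpM2l.
nra.
Qed.
Lemma lip_small j (a b : forall i, X i) e : 0 < e ->
  (forall kk : {k : 'I_n | k \in Ij j}, d (val kk) (a (val kk)) (b (val kk))
     < e / (1 + \sum_(kk : {k : 'I_n | k \in Ij j}) Lam (val kk) j)) ->
  d j (Fm Fj a j) (Fm Fj b j) < e.
Proof.
move=> e0 Hab.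
set L := \sum_(kk : {k : 'I_n | k \in Ij j}) Lam (val kk) j.
have L0 : 0 <= L by apply: sumr_ge0.
have := HLip j (fun kk => a (val kk)) (fun kk => b (val kk)).
rewrite /Fm /Fmap => H; apply: le_lt_trans H _.
apply: le_lt_trans (_ : \sum_(kk : {k : 'I_n | k \in Ij j}) Lam (val kk) j * (e / (1 + L)) < e).
  by apply: ler_sum => kk _; apply: ler_wpM2l => //; apply: ltW.
rewrite -mulr_suml -/L mulrA ltr_pdivrMr; last by lra.
nra.
Qed.

Definition Unif i := forall e : R, 0 < e -> exists K, forall k, (K <= k)%N ->
  forall y y', d i (XS y k i) (XS y' k i) < e.

Lemma Unif_S j : j \in S -> Unif j.
Proof.
move=> Hj e e0; have [K HK] := S_unif e e0; exists K => k Kk y y'.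
exact: HK.
Qed.

Lemma Unif_lip i : (forall kk : {k : 'I_n | k \in Ij i}, Unif (val kk)) -> Unif i.
Proof.
move=> HU e e0.
set L := \sum_(kk : {k : 'I_n | k \in Ij i}) Lam (val kk) i.
have L0 : 0 <= L by apply: sumr_ge0.
have del0 : 0 < e / (1 + L) by apply: divr_gt0 => //; lra.
have [K HK] := fin_exists_max (P := fun (kk : {k : 'I_n | k \in Ij i}) K =>
    forall k, (K <= k)%N -> forall y y',
      d (val kk) (XS y k (val kk)) (XS y' k (val kk)) < e / (1 + L))
  (fun kk a b ab H k bk => H k (leq_trans ab bk))
  (fun kk => HU kk _ del0).
exists K.+1 => [[|k]] // Kk y y'.
rewrite !xsS; apply: lip_small => // kk; exact: HK.
Qed.

Lemma Unif_path m : forall i q, path (gedge Ij) i q -> uniq (i :: q) ->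
  all (fun v => v \notin S) q -> (n <= m + size q)%N -> Unif i.
Proof.
elim: m => [|m IH] i q Hp Hu Ha Hs.
all: case: (boolP (i \in S)) => iS; first exact: Unif_S.
  by have := uniq_size_le Hu => /=; lia.
apply: Unif_lip => kk.
case: (boolP (val kk \in S)) => lS; first exact: Unif_S.
have Hp' : path (gedge Ij) (val kk) (i :: q) by rewrite /= Hp andbT; apply: (valP kk).
have Ha' : all (fun v => v \notin S) (i :: q) by rewrite /= iS.
apply: (IH _ (i :: q)) => //.
- rewrite cons_uniq Hu andbT; apply/negP => lin.
  apply: (cyc_free HS lS Hp' Hu lin).
  by apply/allP => v /mem_take; move/allP: Ha'; apply.
- by rewrite /=; lia.
Qed.

Lemma Unif_all i : Unif i.
Proof. by apply: (Unif_path n i [::]) => //; rewrite addn0. Qed.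
Lemma dmax_lt (u w : forall i, X i) e : 0 < e ->
  (forall i, d i (u i) (w i) < e) -> dmax d u w < e.
Proof.
move=> e0 H; rewrite /dmax; apply: (big_ind (fun x => x < e)) => //.
by move=> x y xe ye; rewrite gt_max xe ye.
Qed.

Lemma UA e : 0 < e -> exists K, forall k, (K <= k)%N ->
  forall y y' i, d i (XS y k i) (XS y' k i) < e.
Proof.
move=> e0.
have [K HK] := fin_exists_max (P := fun i K => forall k, (K <= k)%N ->
    forall y y', d i (XS y k i) (XS y' k i) < e)
  (fun i a b ab H k bk => H k (leq_trans ab bk)) (fun i => Unif_all i e e0).
by exists K => k Kk y y' i; apply: HK.
Qed.

Lemma main_res : exists xbar : forall i, X i,
    Fmap Fj xbar = xbar /\
    forall y : forall i, X i, forall e : R, 0 < e ->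
      exists N : nat, forall k : nat, (N <= k)%N ->
        dmax d (iter k (Fmap Fj) y) xbar < e.
Proof.
pose a k := XS x0 k.
have Hc i : cauchy _ _ (d i) (fun k => a k i).
  move=> e e0; have [K HK] := UA e e0; exists K => k m Kk Km.
  have Hmk k' m' : (k' <= m')%N -> (K <= k')%N -> d i (a k' i) (a m' i) < e.
    move=> km Kk'; rewrite /a /xs -(subnKC km) iterD; exact: HK.
  case: (leqP k m) => km; first exact: Hmk.
  by rewrite dsym; apply: Hmk => //; apply: ltnW.
have Hl i : exists L, dconv _ _ (d i) (fun k => a k i) L.
  exact: (cauchy_conv _ _ _ (Hmetric i) (Hcompact i)).
pose xbar i := proj1_sig (constructive_indefinite_description _ (Hl i)).
have Hx i : dconv _ _ (d i) (fun k => a k i) (xbar i).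
  exact: (proj2_sig (constructive_indefinite_description _ (Hl i))).
have Hxall e : 0 < e -> exists K, forall k, (K <= k)%N -> forall i,
    d i (a k i) (xbar i) < e.
  move=> e0.
  have [K HK] := fin_exists_max (P := fun i K => forall k, (K <= k)%N ->
      d i (a k i) (xbar i) < e)
    (fun i a b ab H k bk => H k (leq_trans ab bk)) (fun i => Hx i e e0).
  by exists K => k Kk i; apply: HK.
exists xbar; split.
  apply: functional_extensionality_dep => j.
  apply: deq0; apply/eqP; rewrite eq_le dge0 andbT; rewrite leNgt; apply/negP => x0'.
  set x := d j _ _ in x0'.
  set L := \sum_(kk : {k : 'I_n | k \in Ij j}) Lam (val kk) j.
  have L0 : 0 <= L by apply: sumr_ge0.
  have x2 : 0 < x / 2 by apply: divr_gt0.
  have L1 : 0 < 1 + L by lra.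
  have [K1 HK1] := Hxall _ (divr_gt0 x2 L1).
  have [K2 HK2] := Hx j _ x2.
  have H1 : d j (Fmap Fj xbar j) (a (maxn K1 K2).+1 j) < x / 2.
    rewrite /a xsS; apply: lip_small => // kk; rewrite dsym.
    by apply: HK1; apply: leq_maxl.
  have H2 : d j (a (maxn K1 K2).+1 j) (xbar j) < x / 2.
    by apply: HK2; apply: leq_trans (leq_maxr _ _) (leqnSn _).
  have := dtri j (Fmap Fj xbar j) (a (maxn K1 K2).+1 j) (xbar j).
  rewrite -/x; lra.
move=> y e e0.
have e2 : 0 < e / 2 by apply: divr_gt0.
have [K1 HK1] := UA _ e2; have [K2 HK2] := Hxall _ e2.
exists (maxn K1 K2) => k Kk; apply: dmax_lt => // i.
have := dtri i (iter k (Fmap Fj) y i) (a k i) (xbar i).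
have := HK1 k (leq_trans (leq_maxl _ _) Kk) y x0 i.
have := HK2 k (leq_trans (leq_maxr _ _) Kk) i.
rewrite /a /xs /Fm; lra.
Qed.
End Main.

Theorem theorem9 (R : realType) (n : nat) (X : 'I_n -> Type)
  (d : forall i, X i -> X i -> R)
  (Hmetric : forall i, is_metric (d i))
  (Hcompact : forall i, dcompact (d i))
  (x0 : forall i, X i)
  (Ij : 'I_n -> {set 'I_n}) (HIj : forall j, Ij j != finset.set0)
  (Fj : forall j : 'I_n, (forall k : {k : 'I_n | k \in Ij j}, X (val k)) -> X j)
  (HFcont : forall j, dcontinuous (fun k : {k : 'I_n | k \in Ij j} => d (val k))
                                  (d j) (Fj j))
  (Lam : 'I_n -> 'I_n -> R)
  (HLam0 : forall i j, 0 <= Lam i j)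
  (HLamz : forall i j, i \notin Ij j -> Lam i j = 0)
  (HLip : forall j (a b : forall k : {k : 'I_n | k \in Ij j}, X (val k)),
      d j (Fj j a) (Fj j b)
      <= \sum_(k : {k : 'I_n | k \in Ij j}) Lam (val k) j * d (val k) (a k) (b k))
  (S : {set 'I_n}) (HS : st0 Ij S)
  (Lt : EI Ij S -> EI Ij S -> R)
  (HLt : lipschitz_consts (fun p : EI Ij S => d (base p))
           (expansion Fj x0) (@dep n Ij S) Lt)
  (Hrho : spectral_radius (mx_of Lt) < 1) :
  exists xbar : forall i, X i,
    Fmap Fj xbar = xbar /\
    forall y : forall i, X i, forall e : R, 0 < e ->
      exists N : nat, forall k : nat, (N <= k)%N ->
        dmax d (iter k (Fmap Fj) y) xbar < e.
Proof.
Proof.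
exact: (main_res R n X d Hmetric Hcompact x0 Ij Fj Lam HLam0 HLip S HS Lt HLt Hrho).
Qed.
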